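(* Let $R$ be a ring. Let $(M_\alpha,\varphi_{\alpha\beta})$ be an inverse system of injective left $R$-modules indexed by a countable upward directed poset $I$, with surjective homomorphisms $\varphi_{\alpha\beta}:M_\beta\to M_\alpha$ ($\alpha\le\beta$), and let $M=\varprojlim M_\alpha$ with canonical maps $\pi_\alpha:M\to M_\alpha$. Let $(N_\gamma,\psi_{\delta\gamma})$ be a direct system of projective left $R$-modules indexed by a countable upward directed poset $J$, with one-to-one homomorphisms $\psi_{\delta\gamma}:N_\gamma\to N_\delta$ ($\gamma\le\delta$), and let $N=\varinjlim N_\gamma$ with canonical maps $\iota_\gamma:N_\gamma\to N$. Then for any $\gamma\in J$, $\alpha\in I$ and any homomorphism $f:N_\gamma\to M_\alpha$, there exists a homomorphism $h:N\to M$ such that $f=\pi_\alpha\circ h\circ\iota_\gamma$.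
   Context: Rings are associative with unit, modules are unital. In both the direct and inverse systems the index sets are upward directed; connecting maps of the inverse system go from higher to lower indices, those of the direct system from lower to higher indices. *)

(* Defs.v *)
From HB Require Import structures.
From mathcomp Require Import all_boot all_order all_algebra.
Set Implicit Arguments. Unset Strict Implicit. Unset Printing Implicit Defensive.
Import GRing.Theory.
Local Open Scope ring_scope.

Definition injective_module (R : pzRingType) (E : lmodType R) : Prop :=
  forall (X Y : lmodType R) (i : {linear X -> Y}) (f : {linear X -> E}),
    injective i -> exists g : {linear Y -> E}, forall x, g (i x) = f x.

Definition projective_module (R : pzRingType) (P : lmodType R) : Prop :=
  forall (X Y : lmodType R) (p : {linear X -> Y}) (f : {linear P -> Y}),
    (forall y, exists x, p x = y) -> exists g : {linear P -> X}, forall x, p (g x) = f x.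

Definition countable_directed_poset (I : Type) (le : I -> I -> bool) : Prop :=
  (forall a, le a a) /\
  (forall a b, le a b -> le b a -> a = b) /\
  (forall a b c, le a b -> le b c -> le a c) /\
  (forall a b, exists c, le a c && le b c) /\
  inhabited I /\
  (exists e : I -> nat, injective e).

(* Inverse system: phi a b : M b -> M a for a <= b (values for a not <= b are
   irrelevant). *)
Definition inverse_system (R : pzRingType) (I : Type) (le : I -> I -> bool)
  (M : I -> lmodType R) (phi : forall a b, {linear M b -> M a}) : Prop :=
  (forall a x, phi a a x = x) /\
  (forall a b c, le a b -> le b c -> forall x, phi a b (phi b c x) = phi a c x).

Definition direct_system (R : pzRingType) (J : Type) (le : J -> J -> bool)
  (N : J -> lmodType R) (psi : forall d g, {linear N g -> N d}) : Prop :=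
  (forall g x, psi g g x = x) /\
  (forall g d e, le g d -> le d e -> forall x, psi e d (psi d g x) = psi e g x).

Definition is_inverse_limit (R : pzRingType) (I : Type) (le : I -> I -> bool)
  (M : I -> lmodType R) (phi : forall a b, {linear M b -> M a})
  (L : lmodType R) (pi : forall a, {linear L -> M a}) : Prop :=
  (forall a b, le a b -> forall x, phi a b (pi b x) = pi a x) /\
  (forall (X : lmodType R) (g : forall a, {linear X -> M a}),
     (forall a b, le a b -> forall x, phi a b (g b x) = g a x) ->
     exists u : {linear X -> L},
       (forall a x, pi a (u x) = g a x) /\
       (forall u' : {linear X -> L}, (forall a x, pi a (u' x) = g a x) ->
          forall x, u' x = u x)).

Definition is_direct_limit (R : pzRingType) (J : Type) (le : J -> J -> bool)
  (N : J -> lmodType R) (psi : forall d g, {linear N g -> N d})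
  (L : lmodType R) (iota : forall g, {linear N g -> L}) : Prop :=
  (forall g d, le g d -> forall x, iota d (psi d g x) = iota g x) /\
  (forall (X : lmodType R) (k : forall g, {linear N g -> X}),
     (forall g d, le g d -> forall x, k d (psi d g x) = k g x) ->
     exists u : {linear L -> X},
       (forall g x, u (iota g x) = k g x) /\
       (forall u' : {linear L -> X}, (forall g x, u' (iota g x) = k g x) ->
          forall x, u' x = u x)).

(* Main.v *)
Require Import Defs.
From HB Require Import structures.
From mathcomp Require Import all_boot all_order all_algebra.
From Stdlib Require Import ClassicalEpsilon.

Theorem lemma5 (R : pzRingType)
  (I : Type) (leI : I -> I -> bool) (HI : countable_directed_poset leI)
  (M : I -> lmodType R) (phi : forall a b, {linear M b -> M a})
  (Hphi : inverse_system leI phi)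
  (Minj : forall a, injective_module (M a))
  (phi_surj : forall a b, leI a b -> forall y : M a, exists x, phi a b x = y)
  (Mlim : lmodType R) (pi : forall a, {linear Mlim -> M a})
  (Hlim : is_inverse_limit leI phi pi)
  (J : Type) (leJ : J -> J -> bool) (HJ : countable_directed_poset leJ)
  (N : J -> lmodType R) (psi : forall d g, {linear N g -> N d})
  (Hpsi : direct_system leJ psi)
  (Nproj : forall g, projective_module (N g))
  (psi_inj : forall g d, leJ g d -> injective (psi d g))
  (Nlim : lmodType R) (iota : forall g, {linear N g -> Nlim})
  (Hcolim : is_direct_limit leJ psi iota) :
  forall (g : J) (a : I) (f : {linear N g -> M a}),
    exists h : {linear Nlim -> Mlim}, forall x, f x = pi a (h (iota g x)).
Proof.
move=> g a f.
case: HI => leIrefl [_ [leItr [dirI [[i0] [eI eIinj]]]]].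
case: HJ => leJrefl [_ [leJtr [dirJ [[j0] [eJ eJinj]]]]].
case: Hphi => phi1 phi2; case: Hpsi => psi1 psi2.
pose ubI x y := proj1_sig (constructive_indefinite_description _ (dirI x y)).
have ubIP x y : leI x (ubI x y) && leI y (ubI x y).
  exact: (proj2_sig (constructive_indefinite_description _ (dirI x y))).
pose ubJ x y := proj1_sig (constructive_indefinite_description _ (dirJ x y)).
have ubJP x y : leJ x (ubJ x y) && leJ y (ubJ x y).
  exact: (proj2_sig (constructive_indefinite_description _ (dirJ x y))).
pose enI n := match excluded_middle_informative (exists x, eI x = n) with
  | left H => proj1_sig (constructive_indefinite_description _ H) | right _ => i0 end.
have enIP b : enI (eI b) = b.
  rewrite /enI; case: excluded_middle_informative => [H|H]; last by exfalso; apply: H; exists b.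
  by apply: eIinj; exact: (proj2_sig (constructive_indefinite_description _ H)).
pose enJ n := match excluded_middle_informative (exists x, eJ x = n) with
  | left H => proj1_sig (constructive_indefinite_description _ H) | right _ => j0 end.
have enJP b : enJ (eJ b) = b.
  rewrite /enJ; case: excluded_middle_informative => [H|H]; last by exfalso; apply: H; exists b.
  by apply: eJinj; exact: (proj2_sig (constructive_indefinite_description _ H)).
pose asq := fix F k := match k with 0 => a | k'.+1 => ubI (F k') (enI k') end.
pose gsq := fix F k := match k with 0 => g | k'.+1 => ubJ (F k') (enJ k') end.
have asmono k k' : k <= k' -> leI (asq k) (asq k').
  elim: k' => [|k' IH]; first by rewrite leqn0 => /eqP ->.
  rewrite leq_eqVlt => /orP [/eqP ->|]; first exact: leIrefl.
  rewrite ltnS => /IH H; apply: leItr H _.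
  by case/andP: (ubIP (asq k') (enI k')).
have gsmono k k' : k <= k' -> leJ (gsq k) (gsq k').
  elim: k' => [|k' IH]; first by rewrite leqn0 => /eqP ->.
  rewrite leq_eqVlt => /orP [/eqP ->|]; first exact: leJrefl.
  rewrite ltnS => /IH H; apply: leJtr H _.
  by case/andP: (ubJP (gsq k') (enJ k')).
have ascof b : leI b (asq (eI b).+1).
  change (leI b (ubI (asq (eI b)) (enI (eI b)))).
  by case/andP: (ubIP (asq (eI b)) (enI (eI b))) => _; rewrite enIP.
have gscof b : leJ b (gsq (eJ b).+1).
  change (leJ b (ubJ (gsq (eJ b)) (enJ (eJ b)))).
  by case/andP: (ubJP (gsq (eJ b)) (enJ (eJ b))) => _; rewrite enJP.
have stepE : forall k (h : {linear N (gsq k) -> M (asq k)}),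
    exists h' : {linear N (gsq k.+1) -> M (asq k.+1)},
      forall x, phi (asq k) (asq k.+1) (h' (psi (gsq k.+1) (gsq k) x)) = h x.
  move=> k h.
  have [e He] := Minj (asq k) _ _ (psi (gsq k.+1) (gsq k)) h (psi_inj _ _ (gsmono _ _ (leqnSn k))).
  have [h' Hh'] := Nproj (gsq k.+1) _ _ (phi (asq k) (asq k.+1)) e
    (phi_surj _ _ (asmono _ _ (leqnSn k))).
  by exists h' => x; rewrite Hh' He.
pose step k h := proj1_sig (constructive_indefinite_description _ (stepE k h)).
have stepP k h x : phi (asq k) (asq k.+1) (step k h (psi (gsq k.+1) (gsq k) x)) = h x.
  exact: (proj2_sig (constructive_indefinite_description _ (stepE k h))).
pose hs := fix F k : {linear N (gsq k) -> M (asq k)} :=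
  match k as k0 return {linear N (gsq k0) -> M (asq k0)} with
  | 0 => f | k'.+1 => step k' (F k') end.
have hsP k k' x : k <= k' ->
    phi (asq k) (asq k') (hs k' (psi (gsq k') (gsq k) x)) = hs k x.
  elim: k' => [|k' IH]; first by rewrite leqn0 => /eqP Hk; subst k; rewrite psi1 phi1.
  rewrite leq_eqVlt => /orP [/eqP Hk|]; first by subst k; rewrite psi1 phi1.
  rewrite ltnS => Hk.
  rewrite -(psi2 _ _ _ (gsmono _ _ Hk) (gsmono _ _ (leqnSn k'))).
  rewrite -(phi2 _ _ _ (asmono _ _ Hk) (asmono _ _ (leqnSn k'))).
  by rewrite [hs k'.+1]/= stepP IH.
pose H d b k x := phi b (asq k) (hs k (psi (gsq k) d x)).
have Hind d b k k' x : k <= k' -> leJ d (gsq k) -> leI b (asq k) -> H d b k x = H d b k' x.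
  move=> Hk Hd Hb; rewrite /H.
  rewrite -(psi2 _ _ _ Hd (gsmono _ _ Hk)).
  rewrite -(phi2 _ _ _ Hb (asmono _ _ Hk)).
  by rewrite hsP.
pose K d b := (maxn (eJ d) (eI b)).+1.
have Kd d b k : K d b <= k -> leJ d (gsq k).
  move=> Hk; apply: leJtr (gscof d) (gsmono _ _ _).
  by apply: leq_trans Hk; rewrite ltnS leq_maxl.
have Kb d b k : K d b <= k -> leI b (asq k).
  move=> Hk; apply: leItr (ascof b) (asmono _ _ _).
  by apply: leq_trans Hk; rewrite ltnS leq_maxr.
have HK d b k x : K d b <= k -> H d b (K d b) x = H d b k x.
  by move=> Hk; apply: Hind => //; [apply: Kd (leqnn _)|apply: Kb (leqnn _)].
pose Hl d b : {linear N d -> M b} :=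
  (phi b (asq (K d b)) \o hs (K d b) \o psi (gsq (K d b)) d).
have HlE d b x : Hl d b x = H d b (K d b) x by [].
have ucompat d : forall b b', leI b b' -> forall x, phi b b' (Hl d b' x) = Hl d b x.
  move=> b b' Hbb x.
  pose k := maxn (K d b) (K d b').
  rewrite !HlE (HK d b k) ?leq_maxl // (HK d b' k) ?leq_maxr //.
  by rewrite /H phi2 // (Kb d b') // leq_maxr.
pose u d := proj1_sig (constructive_indefinite_description _ (Hlim.2 _ (Hl d) (ucompat d))).
have uP d : (forall b x, pi b (u d x) = Hl d b x) /\
    (forall u' : {linear N d -> Mlim}, (forall b x, pi b (u' x) = Hl d b x) -> forall x, u' x = u d x).
  exact: (proj2_sig (constructive_indefinite_description _ (Hlim.2 _ (Hl d) (ucompat d)))).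
have ucomp : forall d d', leJ d d' -> forall x, u d' (psi d' d x) = u d x.
  move=> d d' Hdd x.
  apply: ((uP d).2 (u d' \o psi d' d)) => b y.
  rewrite (uP d').1 !HlE.
  pose k := maxn (K d b) (K d' b).
  rewrite (HK d b k) ?leq_maxl // (HK d' b k) ?leq_maxr //.
  by rewrite /H psi2 // (Kd d' b) // leq_maxr.
have [h [hP _]] := Hcolim.2 _ u ucomp.
exists h => x.
rewrite hP (uP g).1 HlE -(Hind g a 0) //.
- by rewrite /H /= psi1 phi1.
Qed.
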